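(* Let $\Delta\subset M_\mathbb{R}$ be a reflexive polytope with $\dim\Delta=\dim M_\mathbb{R}$, let $\{\Delta_1,\dots,\Delta_s\}$ be a nef-partition of $\Delta$ and $\{\nabla_1,\dots,\nabla_s\}$ its dual nef-partition. Let $p_i\in\nabla_i$ ($1\le i\le s$) with $\sum_{i=1}^sp_i=0$ and $\dim_\mathbb{R}\operatorname{Span}_\mathbb{R}\{p_1,\dots,p_s\}=s-r$. Then there exist pairwise disjoint nonempty sets $I_1,\dots,I_r$ with $\coprod_{k=1}^rI_k=\{1,\dots,s\}$ such that $\sum_{i\in I_k}p_i=0$ for each $k$. *)

(* Defs.v *)
(* M_R = N_R = 'rV[R]_d for R : realType, with the standard pairing. *)
From HB Require Import structures.
From mathcomp Require Import all_boot all_order all_algebra.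
From mathcomp Require Import reals.
Set Implicit Arguments. Unset Strict Implicit. Unset Printing Implicit Defensive.
Import Order.TTheory GRing.Theory Num.Theory.
Local Open Scope ring_scope.

Section Polytopes.
Variables (R : realType) (d : nat).
Local Notation vec := 'rV[R]_d.

Definition pairing (x y : vec) : R := \sum_(i < d) x ord0 i * y ord0 i.

Definition lattice_pt (x : vec) : Prop :=
  exists z : 'rV[int]_d, x = map_mx (fun n : int => n%:~R) z.

Definition conv_seq (S : seq vec) (x : vec) : Prop :=
  exists w : 'I_(size S) -> R,
    [/\ forall i, 0 <= w i, \sum_i w i = 1 & x = \sum_i w i *: S`_i].

Definition conv_hull (A : vec -> Prop) (x : vec) : Prop :=
  exists S : seq vec, (forall y, y \in S -> A y) /\ conv_seq S x.

Definition lattice_polytope (P : vec -> Prop) : Prop :=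
  exists S : seq vec, (forall y, y \in S -> lattice_pt y) /\
    forall x, P x <-> conv_seq S x.

Definition polar (P : vec -> Prop) (y : vec) : Prop :=
  forall x, P x -> -1 <= pairing x y.

Definition interior_pt (P : vec -> Prop) (x : vec) : Prop :=
  exists2 e : R, 0 < e & forall y : vec, (forall i, `|y ord0 i - x ord0 i| < e) -> P y.

(* dim P = d : P contains d+1 affinely independent points *)
Definition full_dim (P : vec -> Prop) : Prop :=
  exists (x0 : vec) (X : 'I_d -> vec),
    [/\ P x0, forall k, P (X k) & \rank (\matrix_(k < d) (X k - x0)) = d].

Definition reflexive_polytope (P : vec -> Prop) : Prop :=
  [/\ lattice_polytope P, interior_pt P 0 & lattice_polytope (polar P)].

Definition vertex (P : vec -> Prop) (v : vec) : Prop :=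
  P v /\ forall (y z : vec) (t : R), P y -> P z -> 0 < t < 1 ->
    v = t *: y + (1 - t) *: z -> y = v /\ z = v.

Definition dual_nef_partition (s : nat) (Dl : 'I_s -> vec -> Prop)
    (j : 'I_s) (y : vec) : Prop :=
  forall (i : 'I_s) (x : vec), Dl i x -> - ((i == j)%:R) <= pairing x y.

Definition minkowski_sum (s : nat) (Q : 'I_s -> vec -> Prop) (y : vec) : Prop :=
  exists q : 'I_s -> vec, (forall i, Q i (q i)) /\ y = \sum_i q i.

(* Batyrev--Borisov nef-partition of a reflexive polytope P:
   a partition E_1,...,E_s (nonempty parts) of the vertex set of P,
   Delta_i = Conv({0} u E_i), (so P = Conv(Delta_1 u ... u Delta_s)),
   and the nef (convexity) condition P^* = nabla_1 + ... + nabla_s. *)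
Definition nef_partition (s : nat) (P : vec -> Prop) (Dl : 'I_s -> vec -> Prop)
  : Prop :=
  exists E : 'I_s -> vec -> Prop,
    [/\ (forall i v, E i v -> vertex P v) /\
          (forall v, vertex P v -> exists! i, E i v),
        forall i, exists v, E i v,
        forall i x, Dl i x <-> conv_hull (fun y => y = 0 \/ E i y) x,
        forall x, P x <-> conv_hull (fun y => exists i, Dl i y) x &
        forall y, polar P y <-> minkowski_sum (dual_nef_partition Dl) y].

End Polytopes.

(* Main.v *)
Require Import Defs.
From HB Require Import structures.
From mathcomp Require Import all_boot all_order all_algebra.
From mathcomp Require Import reals.
From mathcomp Require Import ring lra zify.
Set Implicit Arguments. Unset Strict Implicit. Unset Printing Implicit Defensive.
Import Order.TTheory GRing.Theory Num.Theory.
Local Open Scope ring_scope.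

Lemma pairing_sumr (R : realType) d (I : finType) (P : {pred I}) (F : I -> 'rV[R]_d) x :
  pairing x (\sum_(i in P) F i) = \sum_(i in P) pairing x (F i).
Proof.
rewrite /pairing. under eq_bigr do rewrite summxE mulr_sumr. by rewrite exchange_big.
Qed.

Lemma pairing_scaler (R : realType) d (x y : 'rV[R]_d) a :
  pairing x (a *: y) = a * pairing x y.
Proof.
rewrite /pairing mulr_sumr; apply: eq_bigr => i _; rewrite mxE; ring.
Qed.

Lemma pairing_scalel (R : realType) d (x y : 'rV[R]_d) a :
  pairing (a *: x) y = a * pairing x y.
Proof.
rewrite /pairing mulr_sumr; apply: eq_bigr => i _; rewrite mxE; ring.
Qed.

Lemma pairing_0r (R : realType) d (x : 'rV[R]_d) : pairing x 0 = 0.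
Proof. by rewrite /pairing big1 // => i _; rewrite mxE mulr0. Qed.

Lemma pairing_suml (R : realType) d n (w : 'I_n -> R) (X : 'I_n -> 'rV[R]_d) y :
  pairing (\sum_k w k *: X k) y = \sum_k w k * pairing (X k) y.
Proof.
rewrite /pairing. under eq_bigr do rewrite summxE mulr_suml.
rewrite exchange_big; apply: eq_bigr => k _; rewrite mulr_sumr.
apply: eq_bigr => i _; rewrite mxE; ring.
Qed.

Lemma pairing_delta (R : realType) d (k : 'I_d) (y : 'rV[R]_d) :
  pairing (delta_mx 0 k) y = y 0 k.
Proof.
rewrite /pairing (bigD1 k) //= mxE !eqxx mul1r big1 ?addr0 // => i ik.
by rewrite mxE (negbTE ik) andbF mul0r.
Qed.

Lemma geo (R : realType) d s (Delta : 'rV[R]_d -> Prop) (Dl : 'I_s -> 'rV[R]_d -> Prop)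
  (p : 'I_s -> 'rV[R]_d) (S : {set 'I_s}) :
  interior_pt Delta 0 ->
  (forall x, Delta x <-> conv_hull (fun y => exists i, Dl i y) x) ->
  (forall j y, Dl j y -> 0 <= \sum_(i in S) pairing y (p i)) ->
  \sum_(i in S) p i = 0.
Proof.
move=> [e e0 he] hconv hS.
set q := \sum_(i in S) p i.
have key : forall x, Delta x -> 0 <= pairing x q.
  move=> x /hconv [L [hL [w [w0 w1 ->]]]].
  rewrite pairing_suml; apply: sumr_ge0 => m _; apply: mulr_ge0 => //.
  have [j hj] := hL _ (mem_nth 0 (ltn_ord m)).
  rewrite /q pairing_sumr; exact: hS hj.
apply/rowP => k; rewrite [RHS]mxE.
have hu : forall t, `|t| < e -> 0 <= t * q 0 k.
  move=> t ht; rewrite -pairing_delta -pairing_scalel; apply: key; apply: he => i.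
  rewrite !mxE subr0; case: (_ && _); rewrite ?mulr1 ?mulr0 ?normr0 //.

have e2 : `|e / 2| < e by rewrite ger0_norm; lra.
have e2' : `|- (e / 2)| < e by rewrite normrN.
have h1 := hu _ e2; have h2 := hu _ e2'.
have ep : 0 < e / 2 by lra.
rewrite pmulr_rge0 // in h1.
rewrite mulNr oppr_ge0 pmulr_rle0 // in h2.
by apply/eqP; rewrite eq_le h1 h2.
Qed.

Lemma gk (R : realType) d s (Delta : 'rV[R]_d -> Prop) (Dl : 'I_s -> 'rV[R]_d -> Prop)
  (p : 'I_s -> 'rV[R]_d) :
  interior_pt Delta 0 ->
  (forall x, Delta x <-> conv_hull (fun y => exists i, Dl i y) x) ->
  (forall i, dual_nef_partition Dl i (p i)) -> \sum_i p i = 0 ->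
  forall (T : {set 'I_s}) (c : 'I_s -> R), \sum_(i in T) p i = 0 ->
  \sum_i c i *: p i = 0 ->
  \sum_(i in [set j in T | [forall l in T, c l <= c j]]) p i = 0.
Proof.
move=> hint hconv hp hsum T c hT hc.
set S := [set j in T | [forall l in T, c l <= c j]].
apply: (geo hint hconv) => j y hy.
set a := fun i => pairing y (p i).
have ha : forall i, i != j -> 0 <= a i.
  move=> i ij; have := hp i j y hy; by rewrite eq_sym (negbTE ij) oppr0.
have h0 : \sum_i a i = 0 by rewrite /a -pairing_sumr hsum pairing_0r.
have hT0 : \sum_(i in T) a i = 0 by rewrite /a -pairing_sumr hT pairing_0r.
have hc0 : \sum_i c i * a i = 0.
  by rewrite /a; under eq_bigr do rewrite -pairing_scaler; rewrite -pairing_sumr hc pairing_0r.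
case: (boolP (j \in S)) => jS; last first.
  apply: sumr_ge0 => i iS; apply: ha; apply: contraNneq jS => <-; exact: iS.
have := jS; rewrite inE => /andP [jT /forall_inP jmax].
have step1 : forall i, i \notin T -> a i = 0.
  have hnT : \sum_(i | i \notin T) a i = 0.
    by move: h0; rewrite (bigID (fun i => i \in T)) /= hT0 add0r.
  move=> i iT; apply: (psumr_eq0P _ hnT) => // k kT; apply: ha.
  by apply: contraNneq kT => ->.
have step2 : \sum_(i in T) (c j - c i) * a i = 0.
  have e1 : \sum_i c i * a i = \sum_(i in T) c i * a i.
    rewrite (bigID (fun i => i \in T)) /= [X in _ + X]big1 ?addr0 // => i iT.
    by rewrite step1 ?mulr0.
  under eq_bigr do rewrite mulrBl.
  by rewrite sumrB -mulr_sumr hT0 mulr0 -e1 hc0 subr0.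
have step2' : forall i, i \in T -> (c j - c i) * a i = 0.
  apply: (psumr_eq0P _ step2) => i iT.
  case: (eqVneq i j) => [->|ij]; first by rewrite subrr mul0r.
  by apply: mulr_ge0; [rewrite subr_ge0; exact: jmax | exact: ha].
have step3 : forall i, i \notin S -> a i = 0.
  move=> i iS; case: (boolP (i \in T)) => iT; last exact: step1.
  have := step2' i iT; move/eqP; rewrite mulf_eq0 => /orP [|/eqP //].
  rewrite subr_eq0 => /eqP cij; exfalso; move: iS; rewrite inE iT /=.
  move/negP; apply; apply/forall_inP => l lT; rewrite -cij; exact: jmax.
suff -> : \sum_(i in S) a i = 0 by [].
move: h0; rewrite (bigID (fun i => i \in S)) /= [X in _ + X]big1 ?addr0 //.
Qed.

Lemma exmax (R : realType) s (T : {set 'I_s}) (c : 'I_s -> R) i0 :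
  i0 \in T -> exists2 i1, i1 \in T & forall l, l \in T -> c l <= c i1.
Proof.
move=> i0T.
have := @real_arg_maxP R _ i0 (mem T) c i0T (fun i _ => num_real (c i)).
case=> i1 i1T h; exists i1 => // l lT; exact: h.
Qed.

Lemma lv (R : realType) d s (Delta : 'rV[R]_d -> Prop) (Dl : 'I_s -> 'rV[R]_d -> Prop)
  (p : 'I_s -> 'rV[R]_d) :
  interior_pt Delta 0 ->
  (forall x, Delta x <-> conv_hull (fun y => exists i, Dl i y) x) ->
  (forall i, dual_nef_partition Dl i (p i)) -> \sum_i p i = 0 ->
  forall n (T : {set 'I_s}), (#|T| <= n)%N -> \sum_(i in T) p i = 0 ->
  forall (c : 'I_s -> R), \sum_i c i *: p i = 0 ->
  forall i0, i0 \in T -> \sum_(i in [set j in T | c j == c i0]) p i = 0.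
Proof.
move=> hint hconv hp hsum n; elim: n => [|n IH] T hn hT c hc i0 i0T.
  have : (0 < #|T|)%N by apply/card_gt0P; exists i0.
  by rewrite ltnNge hn.
set S := [set j in T | [forall l in T, c l <= c j]].
have FS : \sum_(i in S) p i = 0 by apply: (gk hint hconv hp hsum).
have ST : S \subset T by apply/subsetP => j; rewrite inE => /andP [].
case: (boolP (i0 \in S)) => i0S.
  suff -> : [set j in T | c j == c i0] = S by [].
  have := i0S; rewrite inE => /andP [_ /forall_inP i0m].
  apply/setP => j; rewrite !inE; apply/idP/idP.
    move=> /andP [jT /eqP ->]; rewrite jT /=; apply/forall_inP; exact: i0m.
  move=> /andP [jT /forall_inP jm]; rewrite jT /= eq_le i0m // jm //.
have [i1 i1T i1m] := exmax c i0T.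
have i1S : i1 \in S by rewrite inE i1T /=; apply/forall_inP.
have FT' : \sum_(i in T :\: S) p i = 0.
  by move: hT; rewrite (big_setID S) /= (setIidPr ST) FS add0r.
have hn' : (#|T :\: S| <= n)%N.
  have hp' : T :\: S \proper T.
    apply/properP; split; first exact: subsetDl.
    exists i1 => //; by rewrite in_setD i1S.
  have h := proper_card hp'; rewrite -ltnS; exact: leq_trans h hn.
have i0T' : i0 \in T :\: S by apply/setDP; split.
have := IH _ hn' FT' c hc i0 i0T'.
suff -> : [set j in T :\: S | c j == c i0] = [set j in T | c j == c i0] by [].
apply/setP => j; rewrite !in_set; apply/idP/idP.
  by case/andP => /andP [_ jT] ->; rewrite jT.
case/andP => jT cj; rewrite cj jT !andbT.
apply/negP => /andP [_ /forall_inP jm]; move/negP: i0S; apply.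
rewrite in_set i0T /=; apply/forall_inP => l lT; rewrite -(eqP cj); exact: jm.
Qed.

Unset Implicit Arguments.

Theorem lemma4p1 (R : realType) (d s r : nat) (Delta : 'rV[R]_d -> Prop)
    (Dl : 'I_s -> 'rV[R]_d -> Prop) (p : 'I_s -> 'rV[R]_d) :
  reflexive_polytope Delta -> full_dim Delta -> nef_partition Delta Dl ->
  (forall i, dual_nef_partition Dl i (p i)) ->
  \sum_(i < s) p i = 0 ->
  (\rank (\matrix_(i < s) p i))%:Z = s%:Z - r%:Z ->
  exists I : 'I_r -> {set 'I_s},
    [/\ forall k, I k != set0,
        forall k l, k != l -> [disjoint I k & I l],
        \bigcup_(k < r) I k = [set: 'I_s] &
        forall k, \sum_(i in I k) p i = 0].
Proof.
move=> hrefl _ hnef hp hsum hrank.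
case: hrefl => _ hint _.
case: hnef => E [_ _ _ hconv _].
set P := \matrix_(i < s) p i.
set Km := kermx P.
have Kc : forall k, \sum_i Km k i *: p i = 0.
  move=> k; have h := congr1 (row k) (mulmx_ker P).
  rewrite row_mul row0 mulmx_sum_row in h; apply: (etrans _ h); apply: eq_bigr => i _.
  by rewrite rowK; congr (_ *: _); rewrite [RHS]mxE.
pose Cls (i : 'I_s) := [set j | [forall k, Km k j == Km k i]].
have FCls : forall i, \sum_(j in Cls i) p j = 0.
  move=> i.
  have Tn : forall n, (n <= s)%N ->
      \sum_(j in [set j | [forall k : 'I_s, (k < n)%N ==> (Km k j == Km k i)]]) p j = 0.
    elim => [|n IH] hn.
      rewrite (eq_bigl xpredT) ?hsum // => j; rewrite inE; apply/forallP => k.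
      by rewrite ltn0.
    have hn' : (n < s)%N by [].
    pose k0 := Ordinal hn'.
    have iT : i \in [set j | [forall k : 'I_s, (k < n)%N ==> (Km k j == Km k i)]].
      by rewrite inE; apply/forallP => k; apply/implyP => _.
    have := lv hint hconv hp hsum (leqnn _) (IH (ltnW hn)) (Kc k0) iT.
    suff -> : [set j in [set j | [forall k : 'I_s, (k < n)%N ==> (Km k j == Km k i)]]
               | Km k0 j == Km k0 i] =
              [set j | [forall k : 'I_s, (k < n.+1)%N ==> (Km k j == Km k i)]] by [].
    apply/setP => j; rewrite !inE; apply/idP/idP.
      case/andP => /forallP h1 h2; apply/forallP => k; apply/implyP.
      rewrite ltnS leq_eqVlt => /orP [/eqP kn | kn].
        by have -> : k = k0 by apply: val_inj.
      exact: (implyP (h1 k) kn).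
    move/forallP => h; apply/andP; split.
      by apply/forallP => k; apply/implyP => kn; exact: (implyP (h k) (ltnW kn)).
    exact: (implyP (h k0) (ltnSn n)).
  have := Tn s (leqnn s).
  suff -> : [set j | [forall k : 'I_s, (k < s)%N ==> (Km k j == Km k i)]] = Cls i by [].
  apply/setP => j; rewrite !inE; apply: eq_forallb => k; by rewrite ltn_ord.
have cls_refl : forall i, i \in Cls i by move=> i; rewrite inE; apply/forallP.
have cls_eq : forall i j, j \in Cls i -> Cls j = Cls i.
  move=> i j; rewrite inE => /forallP h; apply/setP => l; rewrite !inE.
  by apply: eq_forallb => k; rewrite (eqP (h k)).
pose Part := [set Cls i | i : 'I_s].
pose N := #|Part|.
pose X := fun q : 'I_N => (enum_val q : {set 'I_s}).
have XP : forall q, exists i, X q = Cls i.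
  by move=> q; rewrite /X; have := enum_valP q; case/imsetP => i _ ->; exists i.
have Xsurj : forall i, exists q, X q = Cls i.
  move=> i; have hi : Cls i \in Part by apply/imsetP; exists i.
  by exists (enum_rank_in hi (Cls i)); rewrite /X enum_rankK_in.
have memX : forall q j, j \in X q -> X q = Cls j.
  by move=> q j; case: (XP q) => i -> h; rewrite (cls_eq _ _ h).
have Xinj : forall q q', X q = X q' -> q = q' by move=> q q'; apply: enum_val_inj.
have [rep hrep] : exists rep : 'I_N -> 'I_s, forall q, rep q \in X q.
  apply: (@fin_all_exists _ (fun=> 'I_s) (fun q i => i \in X q)) => q; case: (XP q) => i ->; exists i; exact: cls_refl.
have FX : forall q, \sum_(j in X q) p j = 0 by move=> q; case: (XP q) => i ->.
pose B := \matrix_(q < N, j < s) ((j \in X q)%:R : R).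
have hBK : (B <= Km)%MS.
  rewrite sub_kermx; apply/eqP/row_matrixP => q.
  rewrite row_mul row0 mulmx_sum_row; apply: (etrans _ (FX q)); rewrite [RHS]big_mkcond /=.
  apply: eq_bigr => j _; rewrite rowK !mxE.
  by case: (j \in X q); rewrite ?scale1r ?scale0r.
have hKB : (Km <= B)%MS.
  apply/row_subP => k.
  have -> : row k Km = (\row_q Km k (rep q)) *m B.
    have rE : forall (A : 'M[R]_s) a b, row a A 0 b = A a b by move=> A a b; rewrite mxE.
    apply/rowP => j; rewrite [LHS]rE [RHS]mxE /B; under eq_bigr => i _ do rewrite mxE [X in _ * X]mxE.
    have [q0 hq0] := Xsurj j.
    rewrite (bigD1 q0) //= big1 ?addr0.
      have := hrep q0; rewrite hq0 (cls_refl j) mulr1 inE => /forallP h.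
      by rewrite (eqP (h k)).
    move=> q qq0; case: (boolP (j \in X q)) => jq; last by rewrite mulr0.
    by exfalso; move/eqP: qq0; apply; apply: Xinj; rewrite hq0 (memX _ _ jq).
  exact: submxMl.
have hrB : \rank B = N.
  apply/eqP; rewrite eqn_leq rank_leq_row /=.
  pose C := \matrix_(j < s, q < N) ((j == rep q)%:R : R).
  have BC : B *m C = 1%:M.
    apply/matrixP => q q'; rewrite !mxE; under eq_bigr do rewrite !mxE.
    rewrite (bigD1 (rep q')) //= big1 ?addr0; last first.
      by move=> j /negbTE ->; rewrite mulr0.
    rewrite eqxx mulr1.
    have -> : (rep q' \in X q) = (q == q').
      apply/idP/eqP => [h | ->]; last exact: hrep.
      by apply: Xinj; rewrite (memX _ _ h) (memX _ _ (hrep q')).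
    by case: (q == q').
  have := mxrankM_maxl B C; rewrite BC mxrank1 //.
have hN : N = (s - \rank P)%N.
  rewrite -mxrank_ker -/Km -hrB; apply/eqP; rewrite eqn_leq !mxrankS //.
have hPs := rank_leq_row P.
have hrN : r = N.
  rewrite hN; move: hrank; rewrite -/P; lia.
exists (fun k => X (cast_ord hrN k)); split.
- move=> k; case: (XP (cast_ord hrN k)) => i ->; apply/set0Pn; exists i; exact: cls_refl.
- move=> k l kl; rewrite -setI_eq0; apply/eqP/setP => j; rewrite in_setI in_set0.
  apply/negP => /andP [h1 h2]; move/eqP: kl; apply.
  apply: (cast_ord_inj (eq_n := hrN)); apply: Xinj.
  by rewrite (memX _ _ h1) (memX _ _ h2).
- apply/setP => j; rewrite in_setT; apply/bigcupP.
  have [q hq] := Xsurj j.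
  exists (cast_ord (esym hrN) q) => //; rewrite cast_ordKV hq; exact: cls_refl.
- move=> k; exact: FX.
Qed.
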